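(* Fix any quantile vector $\mathbf{q}=(q_1\ge q_2\ge\dots\ge q_N)$ with $q_i\in(0,1)$. Then $\mathrm{STR}(\mathbf{q},\pi)\ge \mathrm{OPT}(\mathbf{q},\pi)$ for every assignment $\pi\in\mathcal{E}_1$. Moreover, with $\pi$ uniformly random from $\Pi_{n,m,c}$, $\mathbb{E}_\pi[\mathrm{STR}(\mathbf{q},\pi)-\mathrm{OPT}(\mathbf{q},\pi)\mid \mathcal{E}_1]\ge \mathbb{E}_{i,j}[b(q_i)-s(q_j)]$, where $i$ is uniform on $I_1$ and $j$ is uniform on $J_1$, independently.
   Context: Setting: distributions $F_B,F_S$ with quantile functions $b(q)=\inf\{x:\Pr_{b\sim F_B}[b\le x]\ge q\}$, $s(q)=\inf\{x:\Pr_{s\sim F_S}[s\le x]\ge q\}$, and $F_B$ first-order stochastically dominates $F_S$, i.e. $b(q)\ge s(q)$ for all $q\in(0,1)$. Integers $m\ge n\ge 20$ (original buyers, original sellers) and $c\ge1$ (new buyers and new sellers); $N=m+n+2c$. $\Pi_{n,m,c}$ is the set of maps $\pi:[N]\to\{\mathrm{BO},\mathrm{BN},\mathrm{SO},\mathrm{SN}\}$ with $|\pi^{-1}(\mathrm{BO})|=m$, $|\pi^{-1}(\mathrm{SO})|=n$, $|\pi^{-1}(\mathrm{BN})|=|\pi^{-1}(\mathrm{SN})|=c$; write $B_{\mathrm{Old}}^\pi=\pi^{-1}(\mathrm{BO})$, $B_{\mathrm{New}}^\pi=\pi^{-1}(\mathrm{BN})$, $S_{\mathrm{Old}}^\pi=\pi^{-1}(\mathrm{SO})$,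 $S_{\mathrm{New}}^\pi=\pi^{-1}(\mathrm{SN})$. Given $\mathbf{q}$ and $\pi$, index $i$ labeled as a buyer is a buyer with value $b(q_i)$ and index labeled as a seller is a seller with value $s(q_i)$; the original market consists of the old buyers and old sellers, the augmented market of all agents. $\mathrm{OPT}(\mathbf{q},\pi)$ is the first-best gains from trade in the original market and $\mathrm{STR}(\mathbf{q},\pi)$ is the gains from trade of Seller Trade Reduction in the augmented market. (First best: with buyer values $b^{(1)}\ge\dots$ and seller values $s^{(1)}\le\dots$, let $r=\max\{i: b^{(i)}\ge s^{(i)}\}$ over $i\le$ min of the side sizes ($r=0$ if none); trade the top $r$ buyers with bottom $r$ sellers, gains $\sum_{i\le r}(b^{(i)}-s^{(i)})$. STR: with $s^{(k)}=\infty$ beyond the number of sellers, if $b^{(r)}\ge s^{(r+1)}$ trade $r$ pairs, else trade only the top $r-1$ buyers with bottom $r-1$ sellers.) Let $p=\lceil n/10\rceil$, $I_1=\{1,\dots,p\}$, $I_2=\{p+1,\dots,2p\}$, $J_1=\{N-p+1,\dots,N\}$, $J_2=\{N-2p+1,\dots,N-p\}$. $\mathcal{E}_1$ is the set of $\pi\in\Pi_{n,m,c}$ with $|I_1\cap B_{\mathrm{New}}^\pi|\ge2$, $|I_2\cap B_{\mathrm{Old}}^\pi|\ge1$, $|J_1\cap S_{\mathrm{New}}^\pi|\ge2$, and $|J_2\cap S_{\mathrm{Old}}^\pi|\ge1$. *)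

(* Defs.v *)
From HB Require Import structures.
From mathcomp Require Import all_boot all_order all_algebra.
From mathcomp Require Import all_classical all_reals all_analysis.

Set Implicit Arguments.
Unset Strict Implicit.
Unset Printing Implicit Defensive.

Import Order.TTheory GRing.Theory Num.Theory.
Local Open Scope classical_set_scope.
Local Open Scope ring_scope.

Definition quantile (R : realType) (F : probability R R) (q : R) : R :=
  inf [set x : R | (q%:E <= F [set` `]-oo, x]])%E].

Inductive label := BO | BN | SO | SN.

Definition label_code (l : label) : 'I_4 :=
  match l with BO => inord 0 | BN => inord 1 | SO => inord 2 | SN => inord 3 end.
Definition label_decode (i : 'I_4) : label :=
  match val i with 0 => BO | 1 => BN | 2 => SO | _ => SN end.
Lemma label_codeK : cancel label_code label_decode.
Proof. by case; rewrite /label_decode /= inordK. Qed.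
HB.instance Definition _ := Equality.copy label (can_type label_codeK).
HB.instance Definition _ := Choice.copy label (can_type label_codeK).
HB.instance Definition _ := Countable.copy label (can_type label_codeK).
HB.instance Definition _ := Finite.copy label (can_type label_codeK).

Definition Ntot (n m c : nat) : nat := (m + n + 2 * c)%N.

(* Agent indices 1..N are represented by ordinals 0..N-1 (index i <-> i-1). *)

Definition Pi_set (n m c : nat) : {set {ffun 'I_(Ntot n m c) -> label}} :=
  [set pi : {ffun 'I_(Ntot n m c) -> label} | [&& #|[set i | pi i == BO]| == m, #|[set i | pi i == SO]| == n,
               #|[set i | pi i == BN]| == c & #|[set i | pi i == SN]| == c]].

Definition pp (n : nat) : nat := (n %/ 10 + (n %% 10 != 0))%N. (* ceil (n/10) *)

(* I_1 = {1..p}, I_2 = {p+1..2p}, J_1 = {N-p+1..N}, J_2 = {N-2p+1..N-p},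
   written for 0-based ordinals. *)
Definition I1 (N p : nat) : {set 'I_N} := [set i : 'I_N | (i < p)%N].
Definition I2 (N p : nat) : {set 'I_N} := [set i : 'I_N | (p <= i < 2 * p)%N].
Definition J1 (N p : nat) : {set 'I_N} := [set i : 'I_N | (N - p <= i)%N].
Definition J2 (N p : nat) : {set 'I_N} := [set i : 'I_N | (N - 2 * p <= i < N - p)%N].

Definition E1_set (n m c : nat) : {set {ffun 'I_(Ntot n m c) -> label}} :=
  let N := Ntot n m c in let p := pp n in
  [set pi : {ffun 'I_(Ntot n m c) -> label} | (pi \in Pi_set n m c) &&
    [&& (2 <= #|I1 N p :&: [set i | pi i == BN]|)%N,
        (1 <= #|I2 N p :&: [set i | pi i == BO]|)%N,
        (2 <= #|J1 N p :&: [set i | pi i == SN]|)%N &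
        (1 <= #|J2 N p :&: [set i | pi i == SO]|)%N]].

Section Market.
Variable R : realType.

Definition sort_desc (s : seq R) : seq R := sort (fun x y => y <= x) s.
Definition sort_asc (s : seq R) : seq R := sort (fun x y => x <= y) s.

(* 1-based order statistics *)
Definition bth (bs : seq R) (i : nat) : R := nth 0 (sort_desc bs) i.-1.
Definition sth (ss : seq R) (i : nat) : R := nth 0 (sort_asc ss) i.-1.

Definition fb_r (bs ss : seq R) : nat :=
  \max_(i < (minn (size bs) (size ss)).+1 | (0 < i)%N && (sth ss i <= bth bs i)) i.

Definition gains_k (bs ss : seq R) (k : nat) : R :=
  \sum_(1 <= i < k.+1) (bth bs i - sth ss i).

Definition first_best (bs ss : seq R) : R := gains_k bs ss (fb_r bs ss).

(* Seller Trade Reduction: with s^(k) = +oo for k > #sellers, trade r pairs if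
   b^(r) >= s^(r+1), otherwise only r-1 pairs (no trade if r = 0). *)
Definition str_gains (bs ss : seq R) : R :=
  let r := fb_r bs ss in
  if r == 0%N then 0
  else if ((r < size ss)%N && (sth ss r.+1 <= bth bs r))
       then gains_k bs ss r else gains_k bs ss r.-1.

Variables (N : nat) (b s : R -> R) (q : 'I_N -> R).

Definition values_of (v : R -> R) (P : pred 'I_N) : seq R :=
  [seq v (q i) | i <- enum 'I_N & P i].

Definition OPT (pi : {ffun 'I_N -> label}) : R :=
  first_best (values_of b (fun i => pi i == BO)) (values_of s (fun i => pi i == SO)).

Definition STR (pi : {ffun 'I_N -> label}) : R :=
  str_gains (values_of b (fun i => (pi i == BO) || (pi i == BN)))
            (values_of s (fun i => (pi i == SO) || (pi i == SN))).

End Market.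

(* Expectation of X under pi uniform on Pi, conditioned on the event E
   (= uniform average over E). *)
Definition cond_exp (R : realType) (T : finType) (E : {set T}) (X : T -> R) : R :=
  (\sum_(x in E) X x) / #|E|%:R.

(* Main.v *)
Require Import Defs.
From HB Require Import structures.
From mathcomp Require Import all_boot all_order all_algebra.
From mathcomp Require Import all_classical all_reals all_analysis.
From mathcomp Require Import zify.
From Stdlib Require Import Lia.
From mathcomp Require Import ring lra.
Import Order.TTheory GRing.Theory Num.Theory.
Local Open Scope ring_scope.

Definition idTR (R : realType) : R -> R := fun x => x.
HB.instance Definition _ (R : realType) :=
  @isMeasurableFun.Build _ _ _ _ (idTR R) (@measurable_id _ _ setT).

Set Implicit Arguments.
Unset Strict Implicit.
Unset Printing Implicit Defensive.

Section Quant.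
Local Open Scope classical_set_scope.
Local Open Scope ring_scope.

Lemma cdf_id (R : realType) (F : probability R R) r :
  cdf (idTR R : {RV F >-> R}) r = F [set` `]-oo, r]].
Proof.
rewrite /cdf /distribution /pushforward; congr (F _).
Qed.

Lemma F_fin (R : realType) (F : probability R R) r :
  F [set` `]-oo, r]] = (fine (F [set` `]-oo, r]]))%:E.
Proof.
have Hf : (F [set` `]-oo, r]] \is a fin_num)%E.
  exact: (@fin_num_measure _ _ _ F _ (measurable_itv `]-oo, r])).
by rewrite fineK.
Qed.

Lemma quantile_ex (R : realType) (F : probability R R) y : y < 1 ->
  exists t, (y%:E <= F [set` `]-oo, t]])%E.
Proof.
move=> y1.
have := @cvg_cdfy1 _ _ _ F (idTR R : {RV F >-> R}).
move=> /fine_cvgP [_ H].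
have := cvgr_gt _ H _ y1.
move=> [M [_ HM]].
exists (M + 1).
have := HM (M + 1) ltac:(by rewrite ltrDl).
rewrite /= cdf_id => /ltW.
by rewrite F_fin lee_fin.
Qed.

Lemma quantile_lb (R : realType) (F : probability R R) x : 0 < x ->
  exists M, forall t, (x%:E <= F [set` `]-oo, t]])%E -> M <= t.
Proof.
move=> x0.
have := @cvg_cdfNy0 _ _ _ F (idTR R : {RV F >-> R}).
move=> /fine_cvgP [_ H].
have := cvgr_lt _ H _ x0.
move=> [M [_ HM]].
exists (M - 1) => t Ht.
rewrite leNgt; apply/negP => tM.
have := HM (M - 1) ltac:(by rewrite gtrBl).
rewrite /= cdf_id => H2.
have : (F [set` `]-oo, t]] <= F [set` `]-oo, (M - 1)%R]])%E.
  apply: le_measure; rewrite ?inE; try exact: measurable_itv.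
  by apply: subitvPr; rewrite bnd_simp; exact: ltW.
rewrite F_fin (F_fin F (M - 1)) lee_fin => H3.
move: Ht; rewrite F_fin lee_fin => Ht.
have := le_trans Ht H3.
by rewrite leNgt H2.
Qed.

Lemma quantile_mono (R : realType) (F : probability R R) x y :
  0 < x -> x <= y -> y < 1 -> quantile F x <= quantile F y.
Proof.
move=> x0 xy y1; rewrite /quantile.
have [t Ht] := quantile_ex F y1.
have [M HM] := quantile_lb F x0.
have hl : has_lbound [set z : R | (x%:E <= F [set` `]-oo, z]])%E].
  by exists M => z /= /HM.
apply: lb_le_inf; first by exists t.
move=> z /= Hz; apply: (ge_inf hl) => /=.
by apply: le_trans Hz; rewrite lee_fin.
Qed.

End Quant.

Lemma topk (T : finType) (R : realDomainType) (F : T -> R) (x0 : T) (l : seq T) :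
  sorted (fun a b => F b <= F a) l ->
  forall U : {set T}, {subset U <= l} ->
  \sum_(u in U) F u <= \sum_(t < #|U|) F (nth x0 l t).
Proof.
elim: l => [|a l IH] Hs U HU.
  have -> : U = finset.set0 by apply/setP => u; rewrite inE; apply/negP => /HU.
  by rewrite cards0 big_set0 big_ord0.
have Hs' := path_sorted Hs.
have Ha : forall u, u \in l -> F u <= F a.
  move=> u ul; have /allP := order_path_min (fun x y z h1 h2 => le_trans h2 h1) Hs.
  by move/(_ u ul).
case: (boolP (a \in U)) => aU.
  rewrite (big_setD1 a aU) (cardsD1 a U) aU add1n big_ord_recl /=.
  rewrite lerD2l; apply: (IH Hs') => u; rewrite !inE => /andP [ua /HU].
  by rewrite inE (negbTE ua).
case: (set_0Vmem U) => [->|[u uU]]; first by rewrite cards0 big_set0 big_ord0.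
have ul : u \in l.
  have := HU u uU; rewrite inE => /orP [/eqP ua|//].
  by move: aU; rewrite -ua uU.
rewrite (big_setD1 u uU) (cardsD1 u U) uU add1n big_ord_recl /=.
apply: lerD; first exact: Ha.
apply: (IH Hs') => v; rewrite !inE => /andP [vu vU].
have := HU v vU; rewrite inE => /orP [/eqP va|//].
by move: aU; rewrite -va vU.
Qed.

Lemma kth d (R : porderType d) (T : finType) (F : T -> R) (x0 : T) (l : seq T) :
  sorted (fun a b => (F b <= F a)%O) l ->
  forall (U : {set T}) k v, {subset U <= l} -> (k < #|U|)%N ->
  (forall u, u \in U -> (v <= F u)%O) -> (v <= F (nth x0 l k))%O.
Proof.
elim: l => [|a l IH] Hs U k v HU Hk Hv.
  have U0 : U = finset.set0 by apply/setP => u; rewrite inE; apply/negP => /HU.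
  by rewrite U0 cards0 in Hk.
have Hs' := path_sorted Hs.
have Ha : forall u, u \in l -> (F u <= F a)%O.
  move=> u ul; have /allP := order_path_min (fun x y z h1 h2 => le_trans h2 h1) Hs.
  by move/(_ u ul).
case: k Hk => [|k] Hk /=.
  have /card_gt0P [u uU] := Hk.
  apply: le_trans (Hv u uU) _.
  case: (eqVneq u a) => [->//|ua].
  have := HU u uU; rewrite inE (negbTE ua) /=; exact: Ha.
apply: (IH Hs' (U :\ a)).
- move=> u; rewrite !inE => /andP [ua /HU]; by rewrite inE (negbTE ua).
- move: Hk; rewrite (cardsD1 a U); case: (a \in U) => /=; by rewrite ?add1n ?add0n // => /ltnW.
- by move=> u; rewrite inE => /andP [_ /Hv].
Qed.

Lemma kthR (R : realDomainType) (T : finType) (F : T -> R) (x0 : T) (l : seq T) :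
  sorted (fun a b => F b <= F a) l ->
  forall (U : {set T}) k v, {subset U <= l} -> (k < #|U|)%N ->
  (forall u, u \in U -> v <= F u) -> v <= F (nth x0 l k).
Proof. exact: (@kth ring_display R T F x0 l). Qed.

Lemma kthN (T : finType) (F : T -> nat) (x0 : T) (l : seq T) :
  sorted (fun a b => (F b <= F a)%N) l ->
  forall (U : {set T}) k v, {subset U <= l} -> (k < #|U|)%N ->
  (forall u, u \in U -> (v <= F u)%N) -> (v <= F (nth x0 l k))%N.
Proof.
move=> Hs U k v HU Hk Hv.
have Hs' : sorted (fun a b => (F b <= F a)%O) l.
  by apply: sub_sorted Hs => a b; rewrite leEnat.
exact: (@kth _ nat T F x0 l Hs' U k v HU Hk Hv).
Qed.

Lemma pw (T : finType) (R : realDomainType) (Fb Fs : T -> R) (x0 : T) lB lS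
  (U V : {set T}) k :
  sorted (fun a b => Fb b <= Fb a) lB -> sorted (fun a b => Fs a <= Fs b) lS ->
  {subset U <= lB} -> {subset V <= lS} -> (k < #|U|)%N -> (k < #|V|)%N ->
  (forall u w, u \in U -> w \in V -> Fs w <= Fb u) ->
  Fs (nth x0 lS k) <= Fb (nth x0 lB k).
Proof.
move=> sB sS sU sV kU kV H.
apply: (@kthR R T Fb x0 lB sB U k _ sU kU) => u uU.
rewrite -lerN2.
have sS' : sorted (fun a b => - Fs b <= - Fs a) lS.
  by apply: sub_sorted sS => a b; rewrite lerN2.
apply: (@kthR R T (fun w => - Fs w) x0 lS sS' V k _ sV kV) => w wV.
by rewrite lerN2; apply: H.
Qed.

Section Mk.
Variable R : realType.
Implicit Types bs ss : seq R.

Lemma sd_sorted bs : sorted (fun x y : R => y <= x) (sort_desc bs).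
Proof. apply: sort_sorted => x y; exact: le_total. Qed.
Lemma sa_sorted ss : sorted (fun x y : R => x <= y) (sort_asc ss).
Proof. apply: sort_sorted => x y; exact: le_total. Qed.

Lemma fbr_le bs ss : (fb_r bs ss <= minn (size bs) (size ss))%N.
Proof. by apply/bigmax_leqP => i _; rewrite -ltnS ltn_ord. Qed.

Lemma fbr_prop bs ss : (0 < fb_r bs ss)%N -> sth ss (fb_r bs ss) <= bth bs (fb_r bs ss).
Proof.
rewrite /fb_r.
pose K := fun v : nat => (v == 0%N) || (sth ss v <= bth bs v).
suff : K (\max_(i < (minn (size bs) (size ss)).+1 | (0 < i)%N && (sth ss i <= bth bs i)) i).
  by rewrite /K => /orP [/eqP ->|].
apply: (big_ind K) => //.
  by move=> x y Kx Ky; rewrite /maxn; case: ifP.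
by move=> i /andP [_ h]; rewrite /K h orbT.
Qed.

Lemma fbr_ge bs ss k : (0 < k)%N -> (k <= minn (size bs) (size ss))%N ->
  sth ss k <= bth bs k -> (k <= fb_r bs ss)%N.
Proof.
move=> k0 kle h.
have kl : (k < (minn (size bs) (size ss)).+1)%N by rewrite ltnS.
rewrite /fb_r.
have := @leq_bigmax_cond _ (fun i : 'I_(minn (size bs) (size ss)).+1 => (0 < i)%N && (sth ss i <= bth bs i)) (fun i => nat_of_ord i) (Ordinal kl).
by rewrite /= k0 h => /(_ isT).
Qed.

Lemma fbr_mono bs ss i : (0 < i)%N -> (i <= fb_r bs ss)%N -> sth ss i <= bth bs i.
Proof.
move=> i0 ir.
have r0 : (0 < fb_r bs ss)%N by apply: leq_trans ir.
have hr := fbr_prop r0.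
have := fbr_le bs ss; rewrite leq_min => /andP [rb rs].
rewrite /bth /sth in hr *.
apply: le_trans (le_trans _ hr) _.
  apply: (sorted_leq_nth (fun x y z h1 h2 => le_trans h1 h2) (fun x => lexx x) 0 (sa_sorted ss)).
  - by rewrite inE size_sort; apply: leq_trans rs; rewrite prednK // ltnW.
  - by rewrite inE size_sort; apply: leq_trans rs; rewrite prednK.
  - by rewrite -!subn1 leq_sub2r.
apply: (sorted_leq_nth (fun x y z h1 h2 => le_trans h2 h1) (fun x => lexx x) 0 (sd_sorted bs)).
  - by rewrite inE size_sort; apply: leq_trans rb; rewrite prednK // ltnW.
  - by rewrite inE size_sort; apply: leq_trans rb; rewrite prednK // ltnW.
  - by rewrite -!subn1 leq_sub2r.
Qed.

Lemma gains_mono bs ss k k' : (k <= k')%N -> (k' <= fb_r bs ss)%N ->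
  gains_k bs ss k <= gains_k bs ss k'.
Proof.
move=> kk kr; rewrite /gains_k [X in _ <= X](@big_cat_nat _ _ _ k.+1) ?ltnS //=.
rewrite lerDl big_nat_cond; apply: sumr_ge0 => i /andP [/andP [hi1 hi2] _].
rewrite subr_ge0; apply: fbr_mono; first by apply: leq_trans hi1.
by apply: leq_trans kr; rewrite -ltnS.
Qed.

Lemma str_ge bs ss k : (k.+2 <= fb_r bs ss)%N -> gains_k bs ss k.+1 <= str_gains bs ss.
Proof.
move=> h; rewrite /str_gains.
set r := fb_r bs ss in h *.
have r0 : (r == 0%N) = false by apply/negbTE; rewrite -lt0n; apply: leq_trans h.
rewrite r0.
have g1 : gains_k bs ss r.-1 <= gains_k bs ss r by apply: gains_mono => //; exact: leq_pred.
have g2 : gains_k bs ss k.+1 <= gains_k bs ss r.-1.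
  apply: gains_mono; last exact: leq_pred.
  by rewrite -ltnS prednK // lt0n r0.
by case: ifP => _ //; exact: le_trans g2 g1.
Qed.

End Mk.

Section L.
Variable R : realType.
Variable N : nat.
Definition lst (P : pred 'I_N) := [seq i <- enum 'I_N | P i].
Definition anti (f : 'I_N -> R) := forall i j : 'I_N, (i <= j)%N -> f j <= f i.

Lemma lst_sorted P (e : rel 'I_N) : (forall a b : 'I_N, (a < b)%N -> e a b) -> sorted e (lst P).
Proof.
move=> He; apply: (sub_sorted He).
apply: sorted_filter; first exact: ltn_trans.
by have := iota_ltn_sorted 0 N; rewrite -val_enum_ord sorted_map.
Qed.

Lemma lst_rsorted P (e : rel 'I_N) : (forall a b : 'I_N, (b < a)%N -> e a b) -> sorted e (rev (lst P)).
Proof. by move=> He; rewrite rev_sorted; apply: lst_sorted => a b h; exact: He. Qed.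

Lemma lst_uniq P : uniq (lst P).
Proof. by rewrite filter_uniq // enum_uniq. Qed.

Lemma mem_lst P i : (i \in lst P) = P i.
Proof. by rewrite mem_filter mem_enum andbT. Qed.

Lemma sd_map (f : 'I_N -> R) P : anti f -> sort_desc (map f (lst P)) = map f (lst P).
Proof.
move=> af; apply: sorted_sort; first by move=> x y z h1 h2; exact: le_trans h2 h1.
rewrite sorted_map; apply: lst_sorted => a b h; apply: af; exact: ltnW.
Qed.

Lemma sa_map (f : 'I_N -> R) P : anti f -> sort_asc (map f (lst P)) = map f (rev (lst P)).
Proof.
move=> af; apply: (sorted_eq (@le_trans _ R) (@le_anti _ R)).
- by apply: sort_sorted => x y; exact: le_total.
- rewrite sorted_map; apply: lst_rsorted => a b h; apply: af; exact: ltnW.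
- by rewrite /sort_asc perm_sort map_rev perm_sym perm_rev.
Qed.

Lemma bth_map (f : 'I_N -> R) P x0 i : anti f -> (0 < i)%N -> (i <= size (lst P))%N ->
  bth (map f (lst P)) i = f (nth x0 (lst P) i.-1).
Proof. by move=> af i0 il; rewrite /bth sd_map // (nth_map x0) // prednK. Qed.

Lemma sth_map (f : 'I_N -> R) P x0 i : anti f -> (0 < i)%N -> (i <= size (lst P))%N ->
  sth (map f (lst P)) i = f (nth x0 (rev (lst P)) i.-1).
Proof. by move=> af i0 il; rewrite /sth sa_map // (nth_map x0) // size_rev prednK. Qed.

Lemma gains_map (fb fs : 'I_N -> R) PB PS x0 k : anti fb -> anti fs ->
  (k <= size (lst PB))%N -> (k <= size (lst PS))%N ->
  gains_k (map fb (lst PB)) (map fs (lst PS)) k =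
  \sum_(t < k) fb (nth x0 (lst PB) t) - \sum_(t < k) fs (nth x0 (rev (lst PS)) t).
Proof.
move=> afb afs kB kS; rewrite /gains_k big_add1 /= big_mkord -sumrB.
apply: eq_bigr => t _.
rewrite (bth_map x0) // ?(sth_map x0) //; apply: leq_trans (ltn_ord t) _ => //.
Qed.

End L.

Lemma sum_take (R : realType) (T : finType) (F : T -> R) (l : seq T) x0 k :
  uniq l -> (k <= size l)%N ->
  \sum_(u in [set u in take k l]) F u = \sum_(t < k) F (nth x0 l t).
Proof.
move=> ul kl.
rewrite (eq_bigl (fun u => u \in take k l)); last by move=> u; rewrite inE.
rewrite -big_uniq; last exact: take_uniq.
rewrite (big_nth x0) size_takel // big_mkord.
by apply: eq_bigr => t _; rewrite nth_take.
Qed.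

Lemma take_nth_le (T : eqType) (e : rel T) (l : seq T) x0 r u :
  transitive e -> reflexive e -> sorted e l -> (r <= size l)%N ->
  u \in take r l -> e u (nth x0 l r.-1).
Proof.
move=> tr rf sl rl /(nthP x0) [t]; rewrite size_takel // => tr' <-.
rewrite nth_take //; apply: (sorted_leq_nth tr rf x0 sl).
- by rewrite inE; apply: leq_trans rl.
- by rewrite inE; apply: leq_trans rl; rewrite prednK //; apply: leq_ltn_trans tr'.
- by rewrite -ltnS prednK //; apply: leq_ltn_trans tr'.
Qed.

Lemma take_pos (T : eqType) (l : seq T) r u : u \in take r l -> (0 < r)%N.
Proof. case: r => [|r] //; by rewrite take0 in_nil. Qed.

Lemma card_take (T : finType) (l : seq T) r : uniq l -> (r <= size l)%N ->
  #|[set u in take r l]| = r.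
Proof.
move=> ul rl; rewrite cardsE.
by rewrite (card_uniqP _) ?take_uniq // size_takel.
Qed.

Lemma card_lst N (P : pred 'I_N) (U : {set 'I_N}) :
  {subset U <= lst P} -> (#|U| <= size (lst P))%N.
Proof.
move=> sU; rewrite -(card_uniqP (lst_uniq P)).
have h : U \subset (lst P) by apply/fintype.subsetP.
exact: subset_leq_card h.
Qed.

Section Core.
Variables (R : realType) (N : nat).

Lemma core (fb fs : 'I_N -> R) (pi : {ffun 'I_N -> label}) (p m n : nat)
  (x x2 y y2 : 'I_N) :
  anti fb -> anti fs -> (forall i, fs i <= fb i) ->
  #|[set i : 'I_N | (i < p)%N]| = p -> #|[set i : 'I_N | (N - p <= i)%N]| = p ->
  (2 * p <= N)%N ->
  #|[set i | pi i == BO]| = m -> #|[set i | pi i == SO]| = n ->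
  (2 * p <= n + 4)%N -> (2 * p <= m + 4)%N ->
  (x < p)%N -> (x2 < p)%N -> x != x2 -> pi x = BN -> pi x2 = BN ->
  (N - p <= y)%N -> (N - p <= y2)%N -> y != y2 -> pi y = SN -> pi y2 = SN ->
  fb x - fs y <=
    str_gains (map fb (lst (fun i => (pi i == BO) || (pi i == BN))))
              (map fs (lst (fun i => (pi i == SO) || (pi i == SN))))
  - first_best (map fb (lst (fun i => pi i == BO))) (map fs (lst (fun i => pi i == SO))).
Proof.
move=> afb afs hbs cI1 cJ1 hpN cBO cSO hpn hpm xp x2p xx2 pix pix2 yp y2p yy2 piy piy2.
set PB := (fun i => pi i == BO); set PS := (fun i => pi i == SO).
set PBa := (fun i => (pi i == BO) || (pi i == BN)).
set PSa := (fun i => (pi i == SO) || (pi i == SN)).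
have sB : forall P, sorted (fun a b => fb b <= fb a) (lst P).
  by move=> P; apply: lst_sorted => a b h; apply: afb; exact: ltnW.
have sS : forall P, sorted (fun a b => fs a <= fs b) (rev (lst P)).
  by move=> P; apply: lst_rsorted => a b h; apply: afs; exact: ltnW.
have trB : transitive (fun a b : 'I_N => fb b <= fb a).
  by move=> a b c h1 h2; exact: le_trans h2 h1.
have rfB : reflexive (fun a b : 'I_N => fb b <= fb a) by move=> a.
have trS : transitive (fun a b : 'I_N => fs a <= fs b).
  by move=> a b c h1 h2; exact: le_trans h1 h2.
have rfS : reflexive (fun a b : 'I_N => fs a <= fs b) by move=> a.
set lB := lst PB; set lS := rev (lst PS).
set r := fb_r (map fb lB) (map fs (lst PS)).
have := fbr_le (map fb lB) (map fs (lst PS)); rewrite -/r !size_map leq_min.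
move=> /andP [rB rS'].
have rS : (r <= size lS)%N by rewrite size_rev.
have OPTe : first_best (map fb lB) (map fs (lst PS)) =
    \sum_(t < r) fb (nth x lB t) - \sum_(t < r) fs (nth x lS t).
  by rewrite /first_best -/r (gains_map x).
set TB := [set u in take r lB]; set TS := [set u in take r lS].
have cTB : #|TB| = r by apply: card_take => //; exact: lst_uniq.
have cTS : #|TS| = r by apply: card_take => //; rewrite rev_uniq; exact: lst_uniq.
have memTB : forall u, u \in TB -> PB u.
  by move=> u; rewrite inE => /mem_take; rewrite mem_lst.
have memTS : forall u, u \in TS -> PS u.
  by move=> u; rewrite inE => /mem_take; rewrite mem_rev mem_lst.
set ir := nth x lB r.-1; set jr := nth x lS r.-1.
have TBge : forall u, u \in TB -> fb ir <= fb u.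
  move=> u; rewrite inE => uT.
  exact: (take_nth_le x trB rfB (sB PB) rB uT).
have TSle : forall u, u \in TS -> fs u <= fs jr.
  move=> u; rewrite inE => uT.
  exact: (take_nth_le x trS rfS (sS PS) rS uT).
have TBpos : forall u, u \in TB -> (0 < r)%N by move=> u; rewrite inE => /take_pos.
have TSpos : forall u, u \in TS -> (0 < r)%N by move=> u; rewrite inE => /take_pos.
have hr : (0 < r)%N -> fs jr <= fb ir.
  move=> r0; have := fbr_prop r0; rewrite -/r.
  rewrite (bth_map x) // (sth_map x) //; by rewrite size_rev in rS.
set J1s := [set i : 'I_N | (N - p <= i)%N]; set I1s := [set i : 'I_N | (i < p)%N].
set BOs := [set i | pi i == BO]; set SOs := [set i | pi i == SO].
have cross : forall u w : 'I_N, (u < p)%N -> (N - p <= w)%N -> fs w <= fb u.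
  move=> u w up wp; apply: le_trans (hbs u); apply: afs; lia.
have cJ2 : (#|(J1s :\ y) :\ y2| + 2 = p)%N.
  rewrite -cJ1 (cardsD1 y J1s) (cardsD1 y2 (J1s :\ y)) !inE yp y2p (eq_sym y2) yy2 /=.
  lia.
have cI2 : (#|(I1s :\ x) :\ x2| + 2 = p)%N.
  rewrite -cI1 (cardsD1 x I1s) (cardsD1 x2 (I1s :\ x)) !inE xp x2p (eq_sym x2) xx2 /=.
  lia.
have subJ : forall L, L != SN -> [set i | pi i == L] :&: J1s \subset (J1s :\ y) :\ y2.
  move=> L hL; apply/fintype.subsetP => i; rewrite !inE => /andP [/eqP hi ->].
  rewrite !andbT; apply/andP; split; apply/negP => /eqP e; subst i.
    by move: hL; rewrite -hi piy2 eqxx.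
  by move: hL; rewrite -hi piy eqxx.
have subI : forall L, L != BN -> [set i | pi i == L] :&: I1s \subset (I1s :\ x) :\ x2.
  move=> L hL; apply/fintype.subsetP => i; rewrite !inE => /andP [/eqP hi ->].
  rewrite !andbT; apply/andP; split; apply/negP => /eqP e; subst i.
    by move: hL; rewrite -hi pix2 eqxx.
  by move: hL; rewrite -hi pix eqxx.
have BOJ : (#|BOs :&: J1s| + 2 <= p)%N.
  by rewrite -cJ2 leq_add2r; apply: subset_leq_card; apply: (subJ BO); apply/eqP.
have SOJ : (#|SOs :&: J1s| + 2 <= p)%N.
  by rewrite -cJ2 leq_add2r; apply: subset_leq_card; apply: (subJ SO); apply/eqP.
have BOI : (#|BOs :&: I1s| + 2 <= p)%N.
  by rewrite -cI2 leq_add2r; apply: subset_leq_card; apply: (subI BO); apply/eqP.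
have SOI : (#|SOs :&: I1s| + 2 <= p)%N.
  by rewrite -cI2 leq_add2r; apply: subset_leq_card; apply: (subI SO); apply/eqP.
have pBO : (#|BOs :&: J1s| + #|BOs :\: J1s| = m)%N by rewrite cardsID.
have pSO : (#|SOs :&: I1s| + #|SOs :\: I1s| = n)%N by rewrite cardsID.
have side_B : forall w : 'I_N, (N - p <= w)%N -> (0 < r)%N -> fs w <= fb ir.
  move=> w wp r0.
  case: (lerP (fs w) (fs jr)) => h; first exact: le_trans h (hr r0).
  have TSsub : TS \subset SOs :&: J1s.
    apply/fintype.subsetP => u uT; rewrite !inE.
    have -> : pi u == SO by apply: memTS.
    have wu : (w < u)%N.
      rewrite ltnNge; apply/negP => /afs hw.
      by move: (le_lt_trans hw (le_lt_trans (TSle u uT) h)); rewrite ltxx.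
    rewrite /=; lia.
  have rle : (r + 2 <= p)%N.
    apply: leq_trans SOJ; rewrite leq_add2r -cTS; exact: subset_leq_card.
  have sBi : sorted (fun a b : 'I_N => (N - b <= N - a)%N) lB.
    by apply: lst_sorted => a b hab; lia.
  have := @kthN _ (fun i : 'I_N => (N - i)%N) x lB sBi (BOs :\: J1s) r.-1 p.+1.
  move=> /(_ _ _ _) H.
  have Hir : (p.+1 <= N - ir)%N.
    apply: H.
    - by move=> u; rewrite !inE mem_lst => /andP [_ hh].
    - lia.
    - move=> u; rewrite !inE => /andP [hu _]; have := ltn_ord u; lia.
  apply: le_trans (hbs ir); apply: afs; lia.
have side_S : forall u : 'I_N, (u < p)%N -> (0 < r)%N -> fs jr <= fb u.
  move=> u up r0.
  case: (lerP (fb ir) (fb u)) => h; first exact: le_trans (hr r0) h.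
  have TBsub : TB \subset BOs :&: I1s.
    apply/fintype.subsetP => v vT; rewrite !inE.
    have -> : pi v == BO by apply: memTB.
    have vu : (v < u)%N.
      rewrite ltnNge; apply/negP => /afb hv.
      by move: (le_lt_trans hv (lt_le_trans h (TBge v vT))); rewrite ltxx.
    rewrite /=; lia.
  have rle : (r + 2 <= p)%N.
    apply: leq_trans BOI; rewrite leq_add2r -cTB; exact: subset_leq_card.
  have sSi : sorted (fun a b : 'I_N => (b <= a)%N) lS.
    by apply: lst_rsorted => a b hab; lia.
  have := @kthN _ (fun i : 'I_N => nat_of_ord i) x lS sSi (SOs :\: I1s) r.-1 p.
  move=> /(_ _ _ _) H.
  have Hjr : (p <= jr)%N.
    apply: H.
    - by move=> v; rewrite !inE mem_rev mem_lst => /andP [_ hh].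
    - lia.
    - move=> v; rewrite !inE => /andP [hv _]; lia.
  apply: le_trans (hbs u); apply: afs; lia.
have xTB : x \notin TB by apply/negP => /memTB /eqP; rewrite pix.
have x2TB : x2 \notin TB by apply/negP => /memTB /eqP; rewrite pix2.
have yTS : y \notin TS by apply/negP => /memTS /eqP; rewrite piy.
have y2TS : y2 \notin TS by apply/negP => /memTS /eqP; rewrite piy2.
set U := x |: (x2 |: TB); set V := y |: (y2 |: TS).
have cU : #|U| = r.+2.
  have h1 := xTB; have h2 := x2TB; rewrite !inE in h1 h2.
  rewrite /U !cardsU1 !inE (negbTE xx2) (negbTE h1) h2 cTB /=; lia.
have cV : #|V| = r.+2.
  have h1 := yTS; have h2 := y2TS; rewrite !inE in h1 h2.
  rewrite /V !cardsU1 !inE (negbTE yy2) (negbTE h1) h2 cTS /=; lia.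
set lBa := lst PBa; set lSa := rev (lst PSa).
have sU : {subset U <= lBa}.
  move=> u; rewrite /U !in_setU1 mem_lst /PBa => /or3P [/eqP ->|/eqP ->|/memTB].
  - by rewrite pix eqxx orbT.
  - by rewrite pix2 eqxx orbT.
  - by move=> hh; apply/orP; left; exact: hh.
have sV : {subset V <= lSa}.
  move=> u; rewrite /V !in_setU1 mem_rev mem_lst /PSa => /or3P [/eqP ->|/eqP ->|/memTS].
  - by rewrite piy eqxx orbT.
  - by rewrite piy2 eqxx orbT.
  - by move=> hh; apply/orP; left; exact: hh.
have PWC : forall u w, u \in U -> w \in V -> fs w <= fb u.
  move=> u w; rewrite /U /V !in_setU1 => /or3P [/eqP ->|/eqP ->|uT] /or3P [/eqP ->|/eqP ->|wT].
  - exact: cross.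
  - exact: cross.
  - exact: le_trans (TSle w wT) (side_S x xp (TSpos w wT)).
  - exact: cross.
  - exact: cross.
  - exact: le_trans (TSle w wT) (side_S x2 x2p (TSpos w wT)).
  - exact: le_trans (side_B y yp (TBpos u uT)) (TBge u uT).
  - exact: le_trans (side_B y2 y2p (TBpos u uT)) (TBge u uT).
  - exact: le_trans (TSle w wT) (le_trans (hr (TBpos u uT)) (TBge u uT)).
have sBa : (r.+2 <= size lBa)%N by rewrite -cU; exact: card_lst.
have sSa : (r.+2 <= size lSa)%N by rewrite -cV size_rev; apply: card_lst => v /sV; rewrite mem_rev.
have sSa' : (r.+2 <= size (lst PSa))%N by rewrite size_rev in sSa.
set r' := fb_r (map fb lBa) (map fs (lst PSa)).
have r'ge : (r.+2 <= r')%N.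
  apply: fbr_ge => //.
    by rewrite !size_map leq_min sBa sSa'.
  rewrite (bth_map x) // (sth_map x) //=.
  apply: (@pw _ _ fb fs x lBa lSa U V r.+1) => //.
  - exact: sB.
  - exact: sS.
  - by rewrite cU.
  - by rewrite cV.
have Sge := str_ge r'ge.
rewrite (gains_map x) // in Sge; last by apply: ltnW.
  2: by apply: ltnW.
have TkB := @topk _ _ fb x lBa (sB PBa) (x |: TB).
have sxTB : {subset x |: TB <= lBa}.
  by move=> u; rewrite in_setU1 => /orP [/eqP ->|uT]; apply: sU; rewrite /U !in_setU1 ?eqxx ?uT ?orbT.
have := TkB sxTB; rewrite (big_setU1 _ xTB) /= cardsU1 xTB cTB (sum_take _ x) //; last exact: lst_uniq.
move=> {}TkB.
have sSn : sorted (fun a b => - fs b <= - fs a) lSa.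
  by apply: sub_sorted (sS PSa) => a b; rewrite lerN2.
have TkS := @topk _ _ (fun i => - fs i) x lSa sSn (y |: TS).
have syTS : {subset y |: TS <= lSa}.
  by move=> u; rewrite in_setU1 => /orP [/eqP ->|uT]; apply: sV; rewrite /V !in_setU1 ?eqxx ?uT ?orbT.
have := TkS syTS; rewrite (big_setU1 _ yTS) /= cardsU1 yTS cTS (sum_take (fun i => - fs i) x) //; last by rewrite rev_uniq; exact: lst_uniq.
rewrite !sumrN => {}TkS.
rewrite OPTe.
rewrite add1n in TkB TkS.
lra.
Qed.
End Core.

Section Avg.
Variables (R : realType) (N : nat).

Definition swap (i i' j : 'I_N) : 'I_N := if j == i then i' else if j == i' then i else j.
Definition swapf (i i' : 'I_N) (pi : {ffun 'I_N -> label}) : {ffun 'I_N -> label} :=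
  [ffun j => pi (swap i i' j)].

Lemma swapK i i' : involutive (swap i i').
Proof.
move=> j; rewrite /swap.
case: (eqVneq j i) => [->|ji]; first by rewrite eqxx; case: (eqVneq i' i) => [->|] //; rewrite eqxx.
case: (eqVneq j i') => [->|ji']; first by rewrite eqxx.
by rewrite (negbTE ji) (negbTE ji').
Qed.

Lemma swap_inj i i' : injective (swap i i').
Proof. exact: inv_inj (swapK i i'). Qed.

Lemma swapfK i i' : involutive (swapf i i').
Proof. by move=> pi; apply/ffunP => j; rewrite !ffunE swapK. Qed.

Lemma swap_mem (Z : {set 'I_N}) i i' j : (i \in Z) = (i' \in Z) -> (swap i i' j \in Z) = (j \in Z).
Proof.
move=> h; rewrite /swap.
case: (eqVneq j i) => [->|ji] //; case: (eqVneq j i') => [->|ji'] //.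
Qed.

Lemma card_swap (Z : {set 'I_N}) i i' pi L : (i \in Z) = (i' \in Z) ->
  #|Z :&: [set j | swapf i i' pi j == L]| = #|Z :&: [set j | pi j == L]|.
Proof.
move=> h.
have -> : Z :&: [set j | swapf i i' pi j == L] = swap i i' @^-1: (Z :&: [set j | pi j == L]).
  by apply/setP => j; rewrite !inE ffunE swap_mem.
by rewrite card_preimset //; exact: swap_inj.
Qed.

Lemma swapf_inj i i' : injective (swapf i i').
Proof. exact: inv_inj (swapfK i i'). Qed.

Lemma sum_ind (Z : {set 'I_N}) (pi : {ffun 'I_N -> label}) L (g : 'I_N -> R) :
  \sum_(j in Z :&: [set j | pi j == L]) g j = \sum_(j in Z) (pi j == L)%:R * g j.
Proof.
rewrite (eq_bigl (fun j => (j \in Z) && (pi j == L))); last by move=> j; rewrite !inE.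
rewrite big_mkcondr /=.
apply: eq_bigr => j _; case: (pi j == L) => /=; by rewrite ?mul1r ?mul0r.
Qed.

Lemma avg_sym (E : {set {ffun 'I_N -> label}}) (Z : {set 'I_N}) (L : label) (f : 'I_N -> R) :
  (0 < #|Z|)%N ->
  (forall pi, pi \in E -> (0 < #|Z :&: [set j | pi j == L]|)%N) ->
  (forall i i' pi, i \in Z -> i' \in Z -> (swapf i i' pi \in E) = (pi \in E)) ->
  \sum_(pi in E) ((\sum_(j in Z :&: [set j | pi j == L]) f j) / #|Z :&: [set j | pi j == L]|%:R)
  = #|E|%:R / #|Z|%:R * \sum_(j in Z) f j.
Proof.
move=> Z0 kpos inv.
pose k (pi : {ffun 'I_N -> label}) := #|Z :&: [set j | pi j == L]|.
pose W (j : 'I_N) : R := \sum_(pi in E) (pi j == L)%:R / (k pi)%:R.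
have S1 : \sum_(pi in E) ((\sum_(j in Z :&: [set j | pi j == L]) f j) / (k pi)%:R)
          = \sum_(j in Z) f j * W j.
  under eq_bigr => pi _ do rewrite sum_ind mulr_suml.
  rewrite exchange_big /=; apply: eq_bigr => j _; rewrite mulr_sumr.
  by apply: eq_bigr => pi _; rewrite mulrCA mulrA.
have S2 : forall j j', j \in Z -> j' \in Z -> W j = W j'.
  move=> j j' jZ j'Z; rewrite /W (reindex_inj (swapf_inj (i:=j) (i':=j'))) /=.
  apply: eq_big => [pi|pi _]; first by rewrite inv.
  rewrite /k card_swap; last by rewrite jZ j'Z.
  by rewrite ffunE /swap eqxx.
have S3 : \sum_(j in Z) W j = #|E|%:R.
  rewrite /W exchange_big /=.
  rewrite -sum1_card natr_sum; apply: eq_bigr => pi piE.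
  rewrite -mulr_suml.
  have -> : \sum_(j in Z) (pi j == L)%:R = (k pi)%:R :> R.
    have := sum_ind Z pi L (fun _ => 1); rewrite sumr_const => h.
    rewrite (eq_bigr (fun j => (pi j == L)%:R * 1)); last by move=> j _; rewrite mulr1.
    by rewrite -h.
  by rewrite divff // pnatr_eq0 -lt0n kpos.
have /card_gt0P [j0 j0Z] := Z0.
have Wc : forall j, j \in Z -> W j = W j0 by move=> j jZ; exact: S2.
have W0 : W j0 = #|E|%:R / #|Z|%:R.
  move: S3; rewrite (eq_bigr (fun _ => W j0)); last by move=> j; exact: Wc.
  rewrite sumr_const => <-.
  by rewrite -[W j0 *+ _]mulr_natr mulfK // pnatr_eq0 -lt0n.
rewrite S1 mulr_sumr; apply: eq_bigr => j jZ.
by rewrite Wc // W0 mulrC.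
Qed.

End Avg.

Lemma avg_pt (R : realType) (T : finType) (A B : {set T}) (fb fs : T -> R) (D : R) :
  (0 < #|A|)%N -> (0 < #|B|)%N -> (forall a b, a \in A -> b \in B -> fb a - fs b <= D) ->
  (\sum_(a in A) fb a) / #|A|%:R - (\sum_(b in B) fs b) / #|B|%:R <= D.
Proof.
move=> A0 B0 h.
have H : \sum_(a in A) \sum_(b in B) (fb a - fs b) <= \sum_(a in A) \sum_(b in B) D.
  by apply: ler_sum => a aA; apply: ler_sum => b bB; exact: h.
move: H.
under eq_bigr => a _ do rewrite sumrB sumr_const.
rewrite sumrB sumr_const sumr_const sumr_const sumrMnl => H.
set SA := \sum_(a in A) fb a; set SB := \sum_(b in B) fs b.
have ka : 0 < #|A|%:R :> R by rewrite ltr0n.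
have kb : 0 < #|B|%:R :> R by rewrite ltr0n.
have H' : SA * #|B|%:R - SB * #|A|%:R <= D * #|B|%:R * #|A|%:R by rewrite !mulr_natr.
rewrite -(ler_pM2r (mulr_gt0 ka kb)).
have -> : (SA / #|A|%:R - SB / #|B|%:R) * (#|A|%:R * #|B|%:R)
  = SA * #|B|%:R - SB * #|A|%:R.
  by field; rewrite !pnatr_eq0 -!lt0n A0 B0.
by apply: (le_trans H'); rewrite -mulrA [_ * #|A|%:R]mulrC.
Qed.

Lemma cardI1 N p : (p <= N)%N -> #|I1 N p| = p.
Proof.
move=> pN.
have -> : I1 N p = [set widen_ord pN j | j in 'I_p].
  apply/setP => i; rewrite /I1 inE; apply/idP/imsetP => [ip|[j _ ->]].
    by exists (Ordinal ip) => //; apply: val_inj.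
  by have := ltn_ord j.
rewrite card_imset ?card_ord // => a b /(congr1 val) /= h; exact: val_inj.
Qed.

Lemma cardJ1 N p : (p <= N)%N -> #|J1 N p| = p.
Proof.
move=> pN.
have -> : J1 N p = (@rev_ord N) @^-1: I1 N p.
  apply/setP => i; rewrite /J1 /I1 !inE /=; have := ltn_ord i; lia.
by rewrite card_preimset ?cardI1 //; exact: rev_ord_inj.
Qed.

Lemma card_cls N (pi : {ffun 'I_N -> label}) L :
  #|[set i | pi i == L]%classic| = #|[set i | pi i == L]|.
Proof.
apply: eq_card => i; rewrite inE; apply/idP/idP => [/set_mem //|h]; exact: mem_set.
Qed.

Lemma card_swapT N (i i' : 'I_N) pi L :
  #|[set j | swapf i i' pi j == L]| = #|[set j | pi j == L]|.
Proof.
rewrite -(finset.setTI [set j | swapf i i' pi j == L]) -(finset.setTI [set j | pi j == L]).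
by apply: card_swap; rewrite !inE.
Qed.

Lemma E1_swap n m c (i i' : 'I_(Ntot n m c)) pi : (3 * pp n <= Ntot n m c)%N ->
  ((i \in I1 _ (pp n)) && (i' \in I1 _ (pp n))) || ((i \in J1 _ (pp n)) && (i' \in J1 _ (pp n))) ->
  (swapf i i' pi \in E1_set n m c) = (pi \in E1_set n m c).
Proof.
move=> h3 hii.
have hZ : forall Z : {set 'I_(Ntot n m c)},
  Z \in [:: I1 _ (pp n); I2 _ (pp n); J1 _ (pp n); J2 _ (pp n)] -> (i \in Z) = (i' \in Z).
  move=> Z; rewrite !inE => /or4P [] /eqP ->; move: hii; rewrite /I1 /I2 /J1 /J2 !inE;
  case/orP => /andP [h1 h2]; apply/idP/idP; lia.
rewrite /E1_set /Pi_set !inE /= !card_cls !card_swapT.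
rewrite (card_swap _ _ (hZ (I1 _ (pp n)) _)) ?inE ?eqxx ?orbT //.
rewrite (card_swap _ _ (hZ (I2 _ (pp n)) _)) ?inE ?eqxx ?orbT //.
rewrite (card_swap _ _ (hZ (J1 _ (pp n)) _)) ?inE ?eqxx ?orbT //.
rewrite (card_swap _ _ (hZ (J2 _ (pp n)) _)) ?inE ?eqxx ?orbT //.
Qed.

Unset Implicit Arguments.
Unset Strict Implicit.


Theorem lemma3p1 (R : realType) (FB FS : probability R R)
  (Hdom : forall x : R, 0 < x < 1 -> quantile FS x <= quantile FB x)
  (n m c : nat) (Hn : (20 <= n)%N) (Hmn : (n <= m)%N) (Hc : (1 <= c)%N)
  (q : 'I_(Ntot n m c) -> R)
  (Hq01 : forall i, 0 < q i < 1)
  (Hqmono : forall i j : 'I_(Ntot n m c), (i <= j)%N -> q j <= q i) :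
  (forall pi, pi \in E1_set n m c ->
     OPT (quantile FB) (quantile FS) q pi <= STR (quantile FB) (quantile FS) q pi)
  /\
  ((0 < #|E1_set n m c|)%N ->
     cond_exp (E1_set n m c)
       (fun pi => STR (quantile FB) (quantile FS) q pi - OPT (quantile FB) (quantile FS) q pi)
     >= (\sum_(i in I1 (Ntot n m c) (pp n)) \sum_(j in J1 (Ntot n m c) (pp n))
           (quantile FB (q i) - quantile FS (q j))) / ((pp n)%:R ^+ 2)).
Proof.
pose fb := fun i : 'I_(Ntot n m c) => quantile FB (q i).
pose fs := fun i : 'I_(Ntot n m c) => quantile FS (q i).
have afb : anti fb.
  move=> i j ij; rewrite /fb; have /andP [hj0 hj1] := Hq01 j; have /andP [hi0 hi1] := Hq01 i.
  by apply: quantile_mono => //; apply: Hqmono.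
have afs : anti fs.
  move=> i j ij; rewrite /fs; have /andP [hj0 hj1] := Hq01 j; have /andP [hi0 hi1] := Hq01 i.
  by apply: quantile_mono => //; apply: Hqmono.
have hbs : forall i, fs i <= fb i by move=> i; exact: Hdom.
have [hp2 hp10] : (2 <= pp n)%N /\ (10 * pp n <= n + 9)%N.
  have := divn_eq n 10; have := ltn_pmod n (isT : (0 < 10)%N); rewrite /pp.
  case: eqP => /= h; lia.
have hN : Ntot n m c = (m + n + 2 * c)%N by [].
have hpN : (3 * pp n <= Ntot n m c)%N by lia.
have cI : #|I1 (Ntot n m c) (pp n)| = pp n by apply: cardI1; lia.
have cJ : #|J1 (Ntot n m c) (pp n)| = pp n by apply: cardJ1; lia.
have PT : forall pi, pi \in E1_set n m c -> forall x y, x \in I1 _ (pp n) -> pi x = BN ->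
    y \in J1 _ (pp n) -> pi y = SN ->
    fb x - fs y <= STR (quantile FB) (quantile FS) q pi - OPT (quantile FB) (quantile FS) q pi.
  move=> pi piE x y xI pix yJ piy.
  move: piE; rewrite /E1_set /Pi_set !inE /= !card_cls.
  move=> /andP [/and4P [/eqP cBO /eqP cSO _ _] /and4P [hI1 _ hJ1 _]].
  have [x2 [x2I pix2 x2x]] : exists x2, [/\ x2 \in I1 _ (pp n), pi x2 = BN & x2 != x].
    have : (0 < #|(I1 _ (pp n) :&: [set i | pi i == BN]) :\ x|)%N.
      move: hI1; rewrite (cardsD1 x (I1 _ (pp n) :&: [set i | pi i == BN])) finset.in_setI xI inE pix eqxx /=; lia.
    case/card_gt0P => x2; rewrite in_setD1 finset.in_setI => /and3P [h1 h2 h3].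
    by exists x2; split => //; move: h3; rewrite inE => /eqP.
  have [y2 [y2J piy2 y2y]] : exists y2, [/\ y2 \in J1 _ (pp n), pi y2 = SN & y2 != y].
    have : (0 < #|(J1 _ (pp n) :&: [set i | pi i == SN]) :\ y|)%N.
      move: hJ1; rewrite (cardsD1 y (J1 _ (pp n) :&: [set i | pi i == SN])) finset.in_setI yJ inE piy eqxx /=; lia.
    case/card_gt0P => y2; rewrite in_setD1 finset.in_setI => /and3P [h1 h2 h3].
    by exists y2; split => //; move: h3; rewrite inE => /eqP.
  move: xI x2I yJ y2J; rewrite /I1 /J1 !inE => xI x2I yJ y2J.
  rewrite /STR /OPT /values_of.
  apply: (@core R (Ntot n m c) fb fs pi (pp n) m n x x2 y y2) => //.
  all: try lia.
  - by rewrite eq_sym.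
  - by rewrite eq_sym.
have E1pos : forall pi, pi \in E1_set n m c ->
    (0 < #|I1 _ (pp n) :&: [set i | pi i == BN]|)%N /\ (0 < #|J1 _ (pp n) :&: [set i | pi i == SN]|)%N.
  move=> pi; rewrite /E1_set !inE /= => /andP [_ /and4P [h1 _ h2 _]].
  by split; [apply: leq_trans h1 | apply: leq_trans h2].
have cross : forall x y : 'I_(Ntot n m c), x \in I1 _ (pp n) -> y \in J1 _ (pp n) -> fs y <= fb x.
  move=> x y; rewrite /I1 /J1 !inE => xI yJ.
  apply: le_trans (hbs x); apply: afs; lia.
split.
  move=> pi piE; rewrite -subr_ge0.
  have [/card_gt0P [x] /[!finset.in_setI] /andP [xI] /[!inE] /eqP pix
        /card_gt0P [y] /[!finset.in_setI] /andP [yJ] /[!inE] /eqP piy] := E1pos pi piE.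
  apply: le_trans (PT pi piE x y xI pix yJ piy).
  by rewrite subr_ge0; apply: cross.
move=> E0.
rewrite /cond_exp.
set E := E1_set n m c.
have ptE : forall pi, pi \in E ->
   (\sum_(i in I1 _ (pp n) :&: [set i | pi i == BN]) fb i) / #|I1 _ (pp n) :&: [set i | pi i == BN]|%:R
 - (\sum_(j in J1 _ (pp n) :&: [set j | pi j == SN]) fs j) / #|J1 _ (pp n) :&: [set j | pi j == SN]|%:R
 <= STR (quantile FB) (quantile FS) q pi - OPT (quantile FB) (quantile FS) q pi.
  move=> pi piE; have [h1 h2] := E1pos pi piE; apply: avg_pt => // a b.
  rewrite finset.in_setI => /andP [aI]; rewrite inE => /eqP pa.
  rewrite finset.in_setI => /andP [bJ]; rewrite inE => /eqP pb.
  exact: PT.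
have sumE := ler_sum (index_enum _) ptE.
rewrite sumrB in sumE.
have aB := @avg_sym R _ E (I1 _ (pp n)) BN fb.
have aS := @avg_sym R _ E (J1 _ (pp n)) SN fs.
rewrite aB in sumE; first last.
- by move=> i i' pi iI i'I; apply: E1_swap => //; rewrite iI i'I.
- by move=> pi /E1pos [].
- by rewrite cI; lia.
rewrite aS in sumE; first last.
- by move=> i i' pi iI i'I; apply: E1_swap => //; rewrite iI i'I orbT.
- by move=> pi /E1pos [].
- by rewrite cJ; lia.
rewrite cI cJ /fb /fs in sumE.
have e0 : 0 < #|E|%:R :> R by rewrite ltr0n.
have P0 : (pp n)%:R != 0 :> R by rewrite pnatr_eq0 -lt0n; lia.
rewrite ler_pdivlMr //.
apply: le_trans sumE.
under eq_bigr => i _ do rewrite sumrB sumr_const.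
rewrite sumrB sumr_const sumrMnl cI cJ.
rewrite le_eqVlt; apply/orP; left; apply/eqP.
by field.
Qed.
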